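(* Let $\mathcal{L}\in\mathscr{C}^\infty(\oplus^k\mathrm{T}Q\times\mathbb{R}^k)$ be a regular Lagrangian, fix an index $i$, and suppose that on a natural coordinate domain $\partial\mathcal{L}/\partial q^i=0$. Then $Y=\partial/\partial q^i$ satisfies $\mathscr{L}_Y\eta^\alpha_{\mathcal{L}}=0$ for all $\alpha$ and $\mathscr{L}_YE_{\mathcal{L}}=0$, and for every $k$-vector field $\mathbf{X}=(X_\alpha)$ solving the $k$-contact Lagrangian equations, $$\sum_\alpha\mathscr{L}_{X_\alpha}\Big(\frac{\partial\mathcal{L}}{\partial v^i_\alpha}\Big)=-\sum_\alpha(\mathscr{L}_{(\mathcal{R}_{\mathcal{L}})_\alpha}E_{\mathcal{L}})\frac{\partial\mathcal{L}}{\partial v^i_\alpha}=\sum_\alpha\frac{\partial\mathcal{L}}{\partial s^\alpha}\frac{\partial\mathcal{L}}{\partial v^i_\alpha}.$$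
   Context: Natural coordinates on $\oplus^k\mathrm{T}Q\times\mathbb{R}^k$ are $(q^i,v^i_\alpha,s^\alpha)$. $\mathcal{L}$ is regular if the matrix $\big(\partial^2\mathcal{L}/\partial v^i_\alpha\partial v^j_\beta\big)$ is everywhere invertible. The Lagrangian energy is $E_{\mathcal{L}}=v^i_\alpha\,\partial\mathcal{L}/\partial v^i_\alpha-\mathcal{L}$ and the contact forms are $\eta^\alpha_{\mathcal{L}}=\mathrm{d}s^\alpha-\frac{\partial\mathcal{L}}{\partial v^i_\alpha}\mathrm{d}q^i$; for regular $\mathcal{L}$ these define a $k$-contact structure, whose Reeb vector fields $(\mathcal{R}_{\mathcal{L}})_\alpha$ are the unique vector fields with $i((\mathcal{R}_{\mathcal{L}})_\alpha)\eta^\beta_{\mathcal{L}}=\delta^\beta_\alpha$, $i((\mathcal{R}_{\mathcal{L}})_\alpha)\mathrm{d}\eta^\beta_{\mathcal{L}}=0$. The $k$-contact Lagrangian equations for $\mathbf{X}=(X_1,\dots,X_k)$ are $\sum_\alpha i(X_\alpha)\mathrm{d}\eta^\alpha_{\mathcal{L}}=\mathrm{d}E_{\mathcal{L}}-\sum_\alpha(\mathscr{L}_{(\mathcal{R}_{\mathcal{L}})_\alpha}E_{\mathcal{L}})\eta^\alpha_{\mathcal{L}}$ and $\sum_\alpha i(X_\alpha)\eta^\alpha_{\mathcal{L}}=-E_{\mathcal{L}}$. *)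

(* Defs.v *)
(* local (coordinate) formalization on an open
   natural coordinate domain U of (+)^k TQ x R^k, identified with an open
   subset of R^(n + n k + k). *)
From HB Require Import structures.
From mathcomp Require Import all_boot all_order all_algebra.
From mathcomp Require Import all_classical all_reals all_analysis.
Set Implicit Arguments. Unset Strict Implicit. Unset Printing Implicit Defensive.
Import Order.TTheory GRing.Theory Num.Theory.
Import numFieldNormedType.Exports.
Local Open Scope classical_set_scope.
Local Open Scope ring_scope.

(* coordinate labels: q^i, v^i_alpha, s^alpha *)
Definition coordT (n k : nat) : finType := (('I_n + ('I_n * 'I_k)) + 'I_k)%type.
Definition qc {n k : nat} (i : 'I_n) : coordT n k := inl (inl i).
Definition vc {n k : nat} (i : 'I_n) (a : 'I_k) : coordT n k := inl (inr (i, a)).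
Definition sc {n k : nat} (a : 'I_k) : coordT n k := inr a.

Section Coords.
Variables (R : realType) (n k : nat).
Notation C := (coordT n k).
Definition pt := 'rV[R]_(#|{: C}|).

Definition coord (x : pt) (c : C) : R := x ord0 (enum_rank c).
Definition ebasis (c : C) : pt := delta_mx ord0 (enum_rank c).
Definition pd (c : C) (f : pt -> R) (x : pt) : R := derive f x (ebasis c).
Definition Dn (l : seq C) (f : pt -> R) : pt -> R := foldr pd f l.
Definition smooth_on (U : set pt) (f : pt -> R) : Prop :=
  forall (l : seq C) (x : pt), U x -> differentiable (Dn l f) x.

(* vector fields and 1-forms by their coordinate components *)
Definition vfield := pt -> C -> R.
Definition form1 := pt -> C -> R.

Definition vf_app (X : vfield) (f : pt -> R) (x : pt) : R :=
  \sum_(c : C) X x c * pd c f x.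
Definition contr (X : vfield) (w : form1) (x : pt) : R :=
  \sum_(c : C) X x c * w x c.
(* component d of i(X) d omega *)
Definition contr_d (X : vfield) (w : form1) (x : pt) (d : C) : R :=
  \sum_(c : C) X x c * (pd c (fun y => w y d) x - pd d (fun y => w y c) x).
Definition lie_form (Y : vfield) (w : form1) (x : pt) (d : C) : R :=
  \sum_(c : C) (Y x c * pd c (fun y => w y d) x + w x c * pd d (fun y => Y y c) x).

(* contact forms eta^alpha_L = ds^alpha - dL/dv^i_alpha dq^i *)
Definition etaL (L : pt -> R) (a : 'I_k) : form1 := fun x c =>
  match c with
  | inr b => if b == a then 1 else 0
  | inl (inl i) => - pd (vc i a) L x
  | inl (inr _) => 0
  end.

Definition energy (L : pt -> R) (x : pt) : R :=
  \sum_(i < n) \sum_(a < k) coord x (vc i a) * pd (vc i a) L x - L x.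

Definition vhess (L : pt -> R) (x : pt) : 'M[R]_(#|{: 'I_n * 'I_k}|) :=
  \matrix_(p, q) pd (vc (enum_val p).1 (enum_val p).2)
                    (pd (vc (enum_val q).1 (enum_val q).2) L) x.
Definition regular_on (U : set pt) (L : pt -> R) : Prop :=
  forall x, U x -> vhess L x \in unitmx.

Definition is_reeb (U : set pt) (L : pt -> R) (Rb : 'I_k -> vfield) : Prop :=
  forall (a : 'I_k) (x : pt), U x ->
    (forall b : 'I_k, contr (Rb a) (etaL L b) x = (a == b)%:R) /\
    (forall (b : 'I_k) (d : C), contr_d (Rb a) (etaL L b) x d = 0).

Definition klag_eqs (U : set pt) (L : pt -> R) (Rb : 'I_k -> vfield)
  (X : 'I_k -> vfield) : Prop :=
  forall x, U x ->
    (forall d : C, \sum_(a < k) contr_d (X a) (etaL L a) x d =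
        pd d (energy L) x - \sum_(a < k) vf_app (Rb a) (energy L) x * etaL L a x d) /\
    \sum_(a < k) contr (X a) (etaL L a) x = - energy L x.

Definition dq (i : 'I_n) : vfield := fun _ c => if c == qc i then 1 else 0.
End Coords.

(* Main.v *)
Require Import Defs.
From HB Require Import structures.
From mathcomp Require Import all_boot all_order all_algebra.
From mathcomp Require Import all_classical all_reals all_analysis.
From mathcomp Require Import ring lra.
Import Order.TTheory GRing.Theory Num.Theory.
Import numFieldNormedType.Exports.
Local Open Scope classical_set_scope.
Local Open Scope ring_scope.

Section Gen.
Context {R : realType} {V : normedModType R}.
Implicit Types (f g : V -> R) (x y v : V).

Lemma derive_near0 f x v :
  (\forall h \near (0:R), f (h *: v + x) = f x) -> derive f x v = 0.
Proof.
move=> H; rewrite /derive; apply: lim_near_cst => //.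
near=> h => /=.
have -> : f (h *: v + x) = f x.
  near: h; rewrite near_withinE; apply: (filterS _ H) => h hh _; exact: hh.
by rewrite subrr scaler0.
Unshelve. all: by end_near. Qed.

Lemma derive_near_eq f g x y v :
  (\forall h \near (0:R), f (h *: v + x) - f x = g (h *: v + y) - g y) ->
  derive f x v = derive g y v.
Proof.
move=> H.
have H' : \forall h \near (0:R)^', f (h *: v + x) - f x = g (h *: v + y) - g y.
  by rewrite near_withinE; apply: filterS H => h hh _.
rewrite /derive; congr lim.
rewrite eqEsubset; split.
- apply: near_eq_cvg; apply: filterS H' => h /= ->; by [].
- apply: near_eq_cvg; apply: filterS H' => h /= <-; by [].
Qed.


Lemma quot_line f y v s :
  (fun h : R => h^-1 *: (((fun s' => f (y + s' *: v)) \o shift s) (h *: 1)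
     - f (y + s *: v))) =
  (fun h : R => h^-1 *: ((f \o shift (y + s *: v)) (h *: v) - f (y + s *: v))).
Proof.
apply: funext => h /=.
by rewrite /shift /= scaler1 scalerDl addrCA addrA [y + _]addrC.
Qed.

Lemma loc_const f x v r :
  (forall z, `|x - z| < r -> differentiable f z /\ derive f z v = 0) ->
  forall y t, `|x - y| + `|t| * `|v| < r -> f (y + t *: v) = f y.
Proof.
move=> Hf y t Hyt.
pose G := fun s : R => f (y + s *: v).
have HD : forall s, `|s| <= `|t| -> derivable G s 1 /\ derive G s 1 = 0.
  move=> s hs.
  have hz : `|x - (y + s *: v)| < r.
    apply: le_lt_trans Hyt.
    rewrite opprD addrA (le_trans (ler_normD _ _)) // normrN normrZ lerD2l.
    by rewrite ler_wpM2r.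
  have [df d0] := Hf _ hz.
  rewrite /derivable /derive /G quot_line; split => //.
  exact: diff_derivable.
have key : forall a b, a <= b -> `|a| <= `|t| -> `|b| <= `|t| -> G b = G a.
  move=> a b ab ha hb.
  have hin : forall s, a <= s <= b -> `|s| <= `|t|.
    move=> s /andP[h1 h2]; rewrite ler_norml.
    move: ha hb; rewrite !ler_norml => /andP[ha1 ha2] /andP[hb1 hb2].
    by rewrite (le_trans ha1 h1) (le_trans h2 hb2).
  have h1 : forall s, s \in `]a, b[%R -> is_derive s 1 G ((fun _ => 0) s).
    move=> s; rewrite in_itv /= => /andP[h1 h2].
    have hs : a <= s <= b by rewrite (ltW h1) (ltW h2).
    by have [dG dG0] := HD s (hin s hs); split.
  have h2 : {within `[a, b], continuous G}.
    apply: continuous_in_subspaceT => s; rewrite inE /= in_itv /= => hs.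
    have [dG _] := HD s (hin s hs).
    by apply: differentiable_continuous; apply/derivable1_diffP.
  have [c _ E] := MVT_segment ab h1 h2.
  by apply/eqP; rewrite -subr_eq0 E mul0r.
have : G t = G 0.
  case: (leP 0 t) => ht.
    by apply: key => //; rewrite normr0.
  by apply/esym/key => //; [exact: ltW| rewrite normr0].
by rewrite /G scale0r addr0.
Qed.


Definition Inv f x v (eps : R) :=
  forall y t, `|x - y| < eps -> `|t| < eps -> f (y + t *: v) = f y.

Lemma Inv_exists f x v r : 0 < r ->
  (forall z, `|x - z| < r -> differentiable f z /\ derive f z v = 0) ->
  exists2 eps, 0 < eps & Inv f x v eps.
Proof.
move=> r0 Hf.
have hv : 0 < `|v| + 1 by rewrite ltr_wpDl.
exists (r / (2 * (`|v| + 1))); first by rewrite divr_gt0 // mulr_gt0.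
rewrite /Inv => y t hy ht; apply: (@loc_const f x v r Hf y t).
set e := r / (2 * (`|v| + 1)) in hy ht *.
have he : e * (`|v| + 1) = r / 2.
  rewrite /e; field; by rewrite gt_eqF.
have : `|t| * `|v| <= e * `|v| by rewrite ler_wpM2r // ltW.
lra.
Qed.

Lemma Inv_derive0 f x v eps : 0 < eps -> Inv f x v eps -> derive f x v = 0.
Proof.
move=> e0 H; apply: derive_near0.
near=> h.
rewrite addrC H ?subrr ?normr0 //.
Unshelve. all: by end_near. Qed.

Lemma Inv_pd f x v d eps : 0 < eps -> Inv f x v eps ->
  Inv (fun z => derive f z d) x v (eps / 2).
Proof.
move=> e0 H y t hy ht /=.
have hd : 0 < `|d| + 1 by rewrite ltr_wpDl.
apply: derive_near_eq.
near=> h.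
have hh : `|h| < eps / (2 * (`|d| + 1)).
  near: h; apply: (@nbhs0_lt R R); by rewrite divr_gt0 // mulr_gt0.
have hhd : `|h| * `|d| <= eps / (2 * (`|d| + 1)) * `|d| by rewrite ler_wpM2r // ltW.
have he : eps / (2 * (`|d| + 1)) * (`|d| + 1) = eps / 2.
  field; by rewrite gt_eqF.
have h1 : `|x - (h *: d + y)| < eps.
  rewrite opprD addrCA (le_lt_trans (ler_normD _ _)) // normrN normrZ.
  have : 0 <= `|h| by [].
  have : 0 <= `|d| by [].
  lra.
have e2 : eps / 2 < eps by rewrite ltr_pdivrMr // ltr_pMr // ltr1n.
rewrite addrA H //; last exact: lt_trans ht e2.
rewrite H //; first exact: lt_trans ht e2.
exact: lt_trans hy e2.
Unshelve. all: by end_near. Qed.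

End Gen.

Section Gen2.
Context {R : realType} {V : normedModType R}.
Implicit Types (f g : V -> R) (x y v : V).

Lemma derive_quot f x v l :
  (\forall h \near (0:R)^', h^-1 *: ((f \o shift x) (h *: v) - f x) = l) ->
  derivable f x v /\ derive f x v = l.
Proof.
move=> H; split; first exact: (is_cvg_near_cst l).
rewrite /derive; exact: lim_near_cst.
Qed.

Lemma Inv_mono f x v e1 e2 : e2 <= e1 -> Inv f x v e1 -> Inv f x v e2.
Proof.
move=> le H y t hy ht; apply: H; [exact: lt_le_trans hy le | exact: lt_le_trans ht le].
Qed.

Lemma derive_cst' x v (r : R) : derive (fun _ : V => r) x v = 0.
Proof. exact: derive_cst. Qed.

Lemma deriveN' f x v : derivable f x v -> derive (fun y => - f y) x v = - derive f x v.
Proof. exact: deriveN. Qed.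

End Gen2.

Section Coord.
Context {R : realType} {n k : nat}.
Local Notation C := (coordT n k).
Local Notation P := (pt R n k).

Lemma sumC (F : C -> R) :
  \sum_(c : C) F c = \sum_(j < n) F (qc j) + \sum_(j < n) \sum_(b < k) F (vc j b)
     + \sum_(b < k) F (sc b).
Proof.
rewrite big_sumType /= big_sumType /=; congr (_ + _ + _).
by rewrite pair_bigA; apply: eq_bigr => -[j b] _.
Qed.

Lemma coord_shift (y : P) t d c :
  Defs.coord (y + t *: ebasis R d) c = Defs.coord y c + t * (d == c)%:R.
Proof.
rewrite /Defs.coord /ebasis !mxE eqxx /=.
by rewrite (inj_eq enum_rank_inj) eq_sym.
Qed.

End Coord.

Section Coord2.
Context {R : realType} {n k : nat}.
Local Notation C := (coordT n k).
Local Notation P := (pt R n k).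

Lemma coord_der (x : P) (c d : C) :
  derivable (fun y : P => Defs.coord y c) x (ebasis R d) /\
  pd d (fun y : P => Defs.coord y c) x = (d == c)%:R.
Proof.
apply: derive_quot; near=> h => /=.
rewrite [h *: _ + x]addrC coord_shift addrAC subrr add0r.
by rewrite /GRing.scale /= mulrA mulVf ?mul1r //; near: h; exact: nbhs_dnbhs_neq.
Unshelve. all: by end_near. Qed.

Lemma pd_cst (x : P) d (r : R) : pd d (fun _ : P => r) x = 0.
Proof. exact: derive_cst. Qed.

End Coord2.

Section Main.
Context {R : realType} {n k : nat}.
Local Notation C := (coordT n k).
Local Notation P := (pt R n k).
Variables (U : set P) (L : P -> R) (i : 'I_n).
Hypotheses (oU : open U) (sL : smooth_on U L)
  (qL : forall x, U x -> pd (qc i) L x = 0).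

Local Notation e := (ebasis R (qc i)).

Lemma ball_in x : U x -> exists2 r, 0 < r & forall z, `|x - z| < r -> U z.
Proof.
move=> Ux; have := oU x Ux; rewrite /interior /= => /nbhs_ballP [r r0 H].
exists r => // z hz; apply: H; by rewrite -ball_normE.
Qed.

Lemma diffDn l x : U x -> forall v, derivable (Dn l L) x v.
Proof. by move=> Ux v; apply: diff_derivable; apply: sL. Qed.

Lemma inv_near x : U x ->
  exists2 eps, 0 < eps & (Inv L x e eps /\ forall d, Inv (pd d L) x e eps).
Proof.
move=> Ux; have [r r0 Hr] := ball_in x Ux.
have [eps e0 H] : exists2 eps, 0 < eps & Inv L x e eps.
  apply: (@Inv_exists _ _ L x e r r0) => z hz; split.
    exact: (sL [::] z (Hr _ hz)).
  exact: qL (Hr _ hz).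
exists (eps / 2); first by rewrite divr_gt0.
split; last by move=> d; apply: Inv_pd.
apply: Inv_mono H; rewrite ler_pdivrMr // ler_pMr //; by rewrite ler1n.
Qed.

Lemma pd_q_eta x a d : U x -> pd (qc i) (fun y => etaL L a y d) x = 0.
Proof.
move=> Ux; have [eps e0 [H1 H2]] := inv_near x Ux.
apply: (@Inv_derive0 _ _ _ x _ eps e0) => y t hy ht.
case: d => [[j|[j b]]|b] //=.
by rewrite (H2 _ y t).
Qed.

Lemma pd_q_E x : U x -> pd (qc i) (energy L) x = 0.
Proof.
move=> Ux; have [eps e0 [H1 H2]] := inv_near x Ux.
apply: (@Inv_derive0 _ _ _ x _ eps e0) => y t hy ht.
rewrite /energy H1 //; congr (_ - _); apply: eq_bigr => j _; apply: eq_bigr => b _.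
by rewrite (H2 (vc j b) y t hy ht) coord_shift /= mulr0 addr0.
Qed.

Lemma part1 a x d : U x -> lie_form (dq i) (etaL L a) x d = 0.
Proof.
move=> Ux; rewrite /lie_form (bigD1 (qc i)) //= big1 ?addr0.
  rewrite /dq eqxx mul1r pd_q_eta // add0r.
  by rewrite pd_cst mulr0.
move=> c /negPf nc; rewrite /dq nc mul0r add0r pd_cst mulr0 //.
Qed.

Lemma part2 x : U x -> vf_app (dq i) (energy L) x = 0.
Proof.
move=> Ux; rewrite /vf_app (bigD1 (qc i)) //= big1 ?addr0.
  by rewrite /dq eqxx mul1r pd_q_E.
by move=> c /negPf nc; rewrite /dq nc mul0r.
Qed.


Lemma pd_E x c : U x -> pd c (energy L) x =
  \sum_(j < n) \sum_(b < k) ((c == vc j b)%:R * pd (vc j b) L x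
      + Defs.coord x (vc j b) * pd c (pd (vc j b) L) x) - pd c L x.
Proof.
move=> Ux.
pose F := fun (j : 'I_n) (b : 'I_k) => (fun y : P => Defs.coord y (vc j b)) * pd (vc j b) L.
have eqE : energy L = (\sum_(j < n) \sum_(b < k) F j b) - L.
  apply/funext => y; rewrite /energy /F /=.
  rewrite fct_sumE; congr (_ - _); apply: eq_bigr => j _.
  by rewrite fct_sumE.
have dP : forall j b, derivable (pd (vc j b) L) x (ebasis R c).
  by move=> j b; exact: (diffDn [:: vc j b] x Ux).
have dF : forall j b, derivable (F j b) x (ebasis R c).
  by move=> j b; apply: derivableM; [exact: (coord_der x (vc j b) c).1 | exact: dP].
have dL : derivable L x (ebasis R c) by exact: (diffDn [::] x Ux).
rewrite /pd eqE deriveB //; last first.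
  apply: derivable_sum => j; exact: derivable_sum.
rewrite derive_sum; last by move=> j; exact: derivable_sum.
congr (_ - _); apply: eq_bigr => j _.
rewrite derive_sum //; apply: eq_bigr => b _.
rewrite /F deriveM //; last exact: (coord_der x (vc j b) c).1.
rewrite addrC; congr (_ + _).
by have [_ E] := coord_der x (vc j b) c; rewrite /pd in E; rewrite E mulrC.
Qed.


Lemma deta_q x b j c : U x ->
  pd c (fun y => etaL L b y (qc j)) x = - pd c (pd (vc j b) L) x.
Proof. move=> Ux; apply: deriveN'; exact: (diffDn [:: vc j b] x Ux). Qed.

Lemma deta_v x b j b' c :
  pd c (fun y => etaL L b y (vc j b')) x = 0.
Proof. exact: pd_cst. Qed.

Lemma deta_s x b b' c :
  pd c (fun y => etaL L b y (sc b')) x = 0.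
Proof. exact: pd_cst. Qed.

Hypothesis rL : regular_on U L.

Lemma reeb_q (Rb : 'I_k -> vfield R n k) a x : is_reeb U L Rb -> U x ->
  forall j, Rb a x (qc j) = 0.
Proof.
move=> HR Ux.
have [H1 H2] := HR a x Ux.
have Hs : forall l c', \sum_(j < n) Rb a x (qc j) * pd (vc l c') (pd (vc j a) L) x = 0.
  move=> l c'; have := H2 a (vc l c'); rewrite /contr_d sumC.
  rewrite [X in _ + X + _ = _]big1; last first.
    by move=> j _; rewrite big1 // => b _; rewrite deta_v deta_v subrr mulr0.
  rewrite [X in _ + X = _]big1; last by move=> b _; rewrite deta_s deta_v subrr mulr0.
  move=> E; rewrite -[RHS]E [in RHS]addr0 [in RHS]addr0; apply: eq_bigr => j _.
  by rewrite deta_v deta_q // sub0r opprK.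
pose M := vhess L x.
pose w : 'cV[R]_(#|{: 'I_n * 'I_k}|) :=
  \col_q (if (enum_val q).2 == a then Rb a x (qc (enum_val q).1) else 0).
have Mw : M *m w = 0.
  apply/matrixP => p z; rewrite !mxE.
  pose G := fun q : 'I_n * 'I_k => pd (vc (enum_val p).1 (enum_val p).2)
      (pd (vc q.1 q.2) L) x * (if q.2 == a then Rb a x (qc q.1) else 0).
  transitivity (\sum_(q : 'I_n * 'I_k) G q).
    rewrite [RHS](reindex (fun q : 'I_#|{: 'I_n * 'I_k}| => enum_val q)) /=; last by exists enum_rank => q _; [exact: enum_valK | exact: enum_rankK].
    apply: eq_bigr => q _; rewrite /G /M /w !mxE. by [].
  rewrite -(pair_bigA _ (fun j b => G (j, b))) /=.
  rewrite -[RHS](Hs (enum_val p).1 (enum_val p).2); apply: eq_bigr => j _.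
  rewrite (bigD1 a) //= big1 ?addr0; first by rewrite /G /= eqxx mulrC.
  by move=> b /negPf nb; rewrite /G /= nb mulr0.
have w0 : w = 0.
  have := mulKmx (rL x Ux) w; rewrite -/M Mw mulmx0 => <- //.
move=> j; have : w (enum_rank (j, a)) ord0 = 0 by rewrite w0 mxE.
by rewrite !mxE enum_rankK /= eqxx.
Qed.


Lemma reeb_s (Rb : 'I_k -> vfield R n k) a x : is_reeb U L Rb -> U x ->
  forall b, Rb a x (sc b) = (a == b)%:R.
Proof.
move=> HR Ux b; have [H1 _] := HR a x Ux.
rewrite -(H1 b) /contr sumC big1; last by move=> j _; rewrite (reeb_q Rb a x HR Ux) mul0r.
rewrite add0r big1; last by move=> j _; rewrite big1 // => b' _; rewrite mulr0.
rewrite add0r (bigD1 b) //= eqxx mulr1 big1 ?addr0 //.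
by move=> b' /negPf nb; rewrite nb mulr0.
Qed.

Lemma reeb_v (Rb : 'I_k -> vfield R n k) a x : is_reeb U L Rb -> U x ->
  forall l b, vf_app (Rb a) (pd (vc l b) L) x = 0.
Proof.
move=> HR Ux l b; have [_ H2] := HR a x Ux.
apply/eqP; rewrite -oppr_eq0; apply/eqP; rewrite -[RHS](H2 b (qc l)).
rewrite /vf_app /contr_d -sumrN; apply: eq_bigr => c _.
rewrite deta_q // mulrBr; case: c => [[j|[j b']]|b'] /=.
- by rewrite (reeb_q Rb a x HR Ux j) !mul0r subrr oppr0.
- by rewrite pd_cst mulr0 subr0 mulrN.
- by rewrite pd_cst mulr0 subr0 mulrN.
Qed.

Lemma reebE (Rb : 'I_k -> vfield R n k) a x : is_reeb U L Rb -> U x ->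
  vf_app (Rb a) (energy L) x = - pd (sc a) L x.
Proof.
move=> HR Ux.
pose r := Rb a x.
have E1 : vf_app (Rb a) (energy L) x =
   \sum_(c : C) r c * (\sum_(j < n) \sum_(b < k) ((c == vc j b)%:R * pd (vc j b) L x
      + Defs.coord x (vc j b) * pd c (pd (vc j b) L) x))
   - \sum_(c : C) r c * pd c L x.
  rewrite /vf_app -sumrB; apply: eq_bigr => c _.
  by rewrite pd_E // mulrBr.
have E2 : \sum_(c : C) r c * (\sum_(j < n) \sum_(b < k) ((c == vc j b)%:R * pd (vc j b) L x
      + Defs.coord x (vc j b) * pd c (pd (vc j b) L) x)) =
    \sum_(j < n) \sum_(b < k) r (vc j b) * pd (vc j b) L x.
  under eq_bigr => c _ do rewrite big_distrr /=.
  rewrite exchange_big /=; apply: eq_bigr => j _.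
  under eq_bigr => c _ do rewrite big_distrr /=.
  rewrite exchange_big /=; apply: eq_bigr => b _.
  under eq_bigr => c _ do rewrite mulrDr.
  rewrite big_split /=.
  have -> : \sum_(c : C) r c * (Defs.coord x (vc j b) * pd c (pd (vc j b) L) x) = 0.
    have hv := reeb_v Rb a x HR Ux j b; rewrite /vf_app in hv.
    transitivity (Defs.coord x (vc j b) *
      \sum_(c : C) Rb a x c * pd c (pd (vc j b) L) x); last by rewrite hv mulr0.
    rewrite big_distrr /=; apply: eq_bigr => c _.
    by rewrite mulrCA.
  rewrite addr0 (bigD1 (vc j b)) //= eqxx mul1r big1 ?addr0 //.
  by move=> c /negPf nc; rewrite nc mul0r mulr0.
have E3 : \sum_(c : C) r c * pd c L x =
    \sum_(j < n) \sum_(b < k) r (vc j b) * pd (vc j b) L x + pd (sc a) L x.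
  rewrite sumC big1; last by move=> j _; rewrite /r (reeb_q Rb a x HR Ux j) mul0r.
  rewrite add0r; congr (_ + _).
  rewrite (bigD1 a) //= /r (reeb_s Rb a x HR Ux a) eqxx mul1r big1 ?addr0 //.
  by move=> b nb; rewrite (reeb_s Rb a x HR Ux b) eq_sym (negPf nb) mul0r.
by rewrite E1 E2 E3 opprD addrA subrr add0r.
Qed.


Lemma part3a (Rb X : 'I_k -> vfield R n k) x : klag_eqs U L Rb X -> U x ->
  \sum_(a < k) vf_app (X a) (pd (vc i a) L) x =
    - \sum_(a < k) vf_app (Rb a) (energy L) x * pd (vc i a) L x.
Proof.
move=> HK Ux; have [Hd _] := HK x Ux.
have := Hd (qc i); rewrite pd_q_E // sub0r.
have -> : \sum_(a < k) contr_d (X a) (etaL L a) x (qc i) =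
    - \sum_(a < k) vf_app (X a) (pd (vc i a) L) x.
  rewrite -sumrN; apply: eq_bigr => a _.
  rewrite /contr_d /vf_app -sumrN; apply: eq_bigr => c _.
  by rewrite deta_q // pd_q_eta // subr0 mulrN.
move=> /eqP; rewrite eqr_opp => /eqP ->.
rewrite -sumrN; apply: eq_bigr => a _ /=.
by rewrite mulrN.
Qed.

Lemma main_sec :
  (forall (a : 'I_k) (x : P), U x ->
      forall d : C, lie_form (dq i) (etaL L a) x d = 0) /\
  (forall x, U x -> vf_app (dq i) (energy L) x = 0) /\
  (forall (Rb X : 'I_k -> vfield R n k),
     is_reeb U L Rb ->
     (forall (a : 'I_k) (c : C), smooth_on U (fun x => X a x c)) ->
     klag_eqs U L Rb X ->
     forall x, U x ->
       \sum_(a < k) vf_app (X a) (pd (vc i a) L) x =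
         - \sum_(a < k) vf_app (Rb a) (energy L) x * pd (vc i a) L x /\
       \sum_(a < k) vf_app (X a) (pd (vc i a) L) x =
         \sum_(a < k) pd (sc a) L x * pd (vc i a) L x).
Proof.
split; first by move=> a x Ux d; exact: part1.
split; first exact: part2.
move=> Rb X HR _ HK x Ux.
have h := part3a Rb X x HK Ux; split => //.
rewrite h -sumrN; apply: eq_bigr => a _.
by rewrite reebE // mulNr opprK.
Qed.

End Main.

Theorem mainTheorem18 (R : realType) (n k : nat) (U : set (pt R n k))
  (L : pt R n k -> R) (i : 'I_n) :
  open U -> smooth_on U L -> regular_on U L ->
  (forall x, U x -> pd (qc i) L x = 0) ->
  (forall (a : 'I_k) (x : pt R n k), U x ->
      forall d : coordT n k, lie_form (dq i) (etaL L a) x d = 0) /\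
  (forall x, U x -> vf_app (dq i) (energy L) x = 0) /\
  (forall (Rb X : 'I_k -> vfield R n k),
     is_reeb U L Rb ->
     (forall (a : 'I_k) (c : coordT n k), smooth_on U (fun x => X a x c)) ->
     klag_eqs U L Rb X ->
     forall x, U x ->
       \sum_(a < k) vf_app (X a) (pd (vc i a) L) x =
         - \sum_(a < k) vf_app (Rb a) (energy L) x * pd (vc i a) L x /\
       \sum_(a < k) vf_app (X a) (pd (vc i a) L) x =
         \sum_(a < k) pd (sc a) L x * pd (vc i a) L x).
Proof.
move=> oU sL rL qL.
exact: (main_sec U L i oU sL qL rL).
Qed.
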